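(* In a finite dynamic game as described in the context, let $K=(K^i)_{i\in\mathcal{I}}$ be compressed information such that for every player $i$, $K^i$ is unilaterally sufficient information for player $i$. Then the set of payoff profiles $(J^i(\rho))_{i\in\mathcal{I}}$ attained by $K$-based Bayes–Nash equilibria $\rho$ equals the set of payoff profiles $(J^i(g))_{i\in\mathcal{I}}$ attained by all Bayes–Nash equilibria $g$ (in behavioral strategies with perfect recall).
   Context: Game model: finite set of players $\mathcal{I}$, times $\mathcal{T}=\{1,\dots,T\}$. At time $t$ each player $i$ takes action $U_t^i\in\mathcal{U}_t^i$, obtains reward $R_t^i\in[-1,1]$ and learns new information $Z_t^i\in\mathcal{Z}_t^i$. There is a state $X_t\in\mathcal{X}_t$ with $(X_{t+1},Z_t,R_t)=f_t(X_t,U_t,W_t)$ for fixed functions $f_t$. The primitive random variables are $(X_1,H_1)$ (with $H_1=(H_1^i)_i$ initial information, possibly correlated with $X_1$) and $W_1,\dots,W_T$, mutually independent with commonly known distributions. All sets $\mathcal{X}_t,\mathcal{U}_t,\mathcal{Z}_t,\mathcal{W}_t,\mathcal{H}_1$ are finite. Perfect recall: $H_t^i=(H_1^i,Z_{1:t-1}^i)\in\mathcal{H}_t^i$, and $U_t^i$ is a component of $Z_t^i$. Behavioral strategy $g^i=(g_t^i)_t$, $g_t^i:\mathcal{H}_t^i\to\Delta(\mathcal{U}_t^i)$; payoff $J^i(g)=\mathbb{E}^g[\sum_t R_t^i]$. A profile $g$ is a Bayes–Nash equilibrium (BNE) if $J^i(g)\ge J^i(\tilde g^i,g^{-i})$ for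 all $i$ and all behavioral $\tilde g^i$. A realization is admissible under $g$ if it has positive probability under $g$. Compression: $K_1^i=\iota_1^i(H_1^i)$, $K_t^i=\iota_t^i(K_{t-1}^i,Z_{t-1}^i)$ for fixed maps, values in finite $\mathcal{K}_t^i$; $k_t^i$ is the compression of $h_t^i$. A $K^i$-based strategy has $\rho_t^i:\mathcal{K}_t^i\to\Delta(\mathcal{U}_t^i)$; a $K$-based BNE is a BNE (against all full-history deviations) in which every player uses a $K^i$-based strategy. Unilaterally sufficient information (USI): $K^i$ is USI for player $i$ if there exist functions $F_t^{i,g^i}:\mathcal{K}_t^i\to\Delta(\mathcal{H}_t^i)$ depending only on $g^i$ and $\Phi_t^{i,g^{-i}}:\mathcal{K}_t^i\to\Delta(\mathcal{X}_t\times\mathcal{H}_t^{-i})$ depending only on $g^{-i}$ such that $\Pr^g(x_t,h_t\mid k_t^i)=F_t^{i,g^i}(h_t^i\mid k_t^i)\,\Phi_t^{i,g^{-i}}(x_t,h_t^{-i}\mid k_t^i)$ for all behavioral profiles $g$, all $t$ and all $k_t^i$ admissible under $g$ (here $x_t,h_t^i,h_t^{-i}$ range independently over their sets; if they disagree on shared components the left side is $0$). *)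

(* Defs.v *)
From HB Require Import structures.
From mathcomp Require Import all_boot all_order all_algebra.
From mathcomp Require Import reals.
Set Implicit Arguments. Unset Strict Implicit. Unset Printing Implicit Defensive.
Import Order.TTheory GRing.Theory Num.Theory.
Local Open Scope ring_scope.

(* Times are 0-based: the paper's time t in {1,...,T} is index t-1 < T here.
   All time-indexed sets are families over nat; only indices < T (and T for
   the state X_{T+1}) matter. *)
Record game (I : finType) (R : realType) := Game {
  horizon : nat;
  Xs : nat -> finType;
  Us : I -> nat -> finType;
  Zs : I -> nat -> finType;
  Ws : nat -> finType;
  H1s : I -> finType;
  P0 : Xs 0 -> {dffun forall i, H1s i} -> R;      (* law of (X_1, H_1) *)
  PW : forall t, Ws t -> R;
  dyn : forall t, Xs t -> {dffun forall i, Us i t} -> Ws t ->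
        (Xs t.+1 * {dffun forall i, Zs i t} * (I -> R))%type;
        (* (X_{t+1}, Z_t, R_t) = f_t(X_t, U_t, W_t) *)
  act_of : forall i t, Zs i t -> Us i t   (* the component of Z_t^i that is U_t^i *)
}.

Arguments horizon {I R} _.
Arguments Xs {I R} _ _.
Arguments Us {I R} _ _ _.
Arguments Zs {I R} _ _ _.
Arguments Ws {I R} _ _.
Arguments H1s {I R} _ _.
Arguments P0 {I R} _ _ _.
Arguments PW {I R} _ t _.
Arguments dyn {I R} _ t _ _ _.
Arguments act_of {I R} _ i t _.

Section Game.
Variables (I : finType) (R : realType) (G : game I R).

Let T := horizon G.

Definition wf_game : Prop :=
  [/\ (forall x h, 0 <= P0 G x h),
      \sum_(x : Xs G 0) \sum_(h : {dffun forall i, H1s G i}) P0 G x h = 1,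
      (forall t, (t < T)%N -> (forall w, 0 <= PW G t w) /\ \sum_(w : Ws G t) PW G t w = 1),
      (forall t, (t < T)%N -> forall x u w i,
          -1 <= (dyn G t x u w).2 i <= 1) &
      (forall t, (t < T)%N -> forall x u w i,
          act_of G i t ((dyn G t x u w).1.2 i) = u i)].

Fixpoint Hist (i : I) (t : nat) : finType :=
  match t with
  | 0 => H1s G i
  | t'.+1 => Finite.clone (Hist i t' * Zs G i t')%type _
  end.

Definition jhist (t : nat) := {dffun forall i, Hist i t}.

Definition strat (i : I) := forall t : nat, Hist i t -> Us G i t -> R.

Definition valid_strat (i : I) (s : strat i) : Prop :=
  forall t, (t < T)%N -> forall h : Hist i t,
    (forall u, 0 <= s t h u) /\ \sum_(u : Us G i t) s t h u = 1.

Definition profile := forall i, strat i.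

Definition valid_profile (g : profile) : Prop := forall i, valid_strat (g i).

Definition act_prob (g : profile) t (h : jhist t) (u : {dffun forall i, Us G i t}) : R :=
  \prod_(i : I) g i t (h i) (u i).

Fixpoint mu (g : profile) (t : nat) : Xs G t -> jhist t -> R :=
  match t return Xs G t -> jhist t -> R with
  | 0 => fun x h => P0 G x h
  | t'.+1 => fun x' h' =>
      let hp : jhist t' := finfun (fun i => (h' i).1) in
      \sum_(x : Xs G t') \sum_(u : {dffun forall i, Us G i t'}) \sum_(w : Ws G t')
        mu g x hp * act_prob g hp u * PW G t' w *
        ((((dyn G t' x u w).1.1 == x') &&
          [forall i, (dyn G t' x u w).1.2 i == (h' i).2]) : nat)%:R
  end.

Definition payoff (g : profile) (i : I) : R :=
  \sum_(t < T) \sum_(x : Xs G t) \sum_(h : jhist t) mu g x h *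
     \sum_(u : {dffun forall j, Us G j t}) act_prob g h u *
        \sum_(w : Ws G t) PW G t w * (dyn G t x u w).2 i.

Definition deviate (g : profile) (i : I) (s : strat i) : profile :=
  fun j => match i =P j with
           | ReflectT e => eq_rect i strat s j e
           | ReflectF _ => g j
           end.

Definition BNE (g : profile) : Prop :=
  valid_profile g /\
  forall i (s : strat i), valid_strat s -> payoff (deviate g s) i <= payoff g i.

Record compression := Compression {
  Ks : I -> nat -> finType;
  iota1 : forall i, H1s G i -> Ks i 0;
  iotaS : forall i t, Ks i t -> Zs G i t -> Ks i t.+1
}.

Variable C : compression.

Fixpoint compress (i : I) (t : nat) : Hist i t -> Ks C i t :=
  match t return Hist i t -> Ks C i t with
  | 0 => fun h => @iota1 C i h
  | t'.+1 => fun h => @iotaS C i t' (@compress i t' h.1) h.2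
  end.

Definition K_based (i : I) (s : strat i) : Prop :=
  exists rho : forall t, Ks C i t -> Us G i t -> R,
    forall t, (t < T)%N -> forall h : Hist i t, s t h = rho t (compress h).

Definition K_BNE (g : profile) : Prop := BNE g /\ forall i, K_based (g i).

Definition probK (g : profile) (i : I) t (k : Ks C i t) : R :=
  \sum_(x : Xs G t) \sum_(h : jhist t) mu g x h * ((compress (h i) == k) : nat)%:R.

Definition condK (g : profile) (i : I) t (k : Ks C i t) x (h : jhist t) : R :=
  mu g x h * ((compress (h i) == k) : nat)%:R / probK g k.

Definition others (i : I) := {j : I | j != i}.

Definition USI (i : I) : Prop :=
  exists (F : strat i -> forall t, Ks C i t -> Hist i t -> R)
         (Phi : (forall j : others i, strat (val j)) ->
                forall t, Ks C i t -> Xs G t ->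
                {dffun forall j : others i, Hist (val j) t} -> R),
    forall g : profile, valid_profile g ->
    forall t, (t < T)%N -> forall k : Ks C i t, 0 < probK g k ->
    forall (x : Xs G t) (h : jhist t),
      condK g k x h =
        F (g i) t k (h i) *
        Phi (fun j => g (val j)) t k x (finfun (fun j : others i => h (val j))).

End Game.

(* Main.v *)
Require Import Defs.
From HB Require Import structures.
From mathcomp Require Import all_boot all_order all_algebra.
From mathcomp Require Import reals ring.
From Stdlib Require Import FunctionalExtensionality IndefiniteDescription.
Set Implicit Arguments. Unset Strict Implicit. Unset Printing Implicit Defensive.
Import Order.TTheory GRing.Theory Num.Theory.
Local Open Scope ring_scope.

Section A.
Variables (I : finType) (R : realType) (G : game I R).

Definition upd t (i : I) (h : jhist G t) (b : Hist G i t) : jhist G t :=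
  finfun (fun j => match i =P j with
                   | ReflectT e => eq_rect i (fun j => Hist G j t) b j e
                   | ReflectF _ => h j end).

Lemma upd_i t i h b : @upd t i h b i = b.
Proof.
rewrite /upd ffunE; case: eqP => // e.
by rewrite (eq_irrelevance e erefl).
Qed.

Lemma upd_ne t i h b j : j != i -> @upd t i h b j = h j.
Proof.
move=> ne; rewrite /upd ffunE; case: eqP => // e.
by rewrite e eqxx in ne.
Qed.

Lemma upd_upd t i h b : @upd t i (@upd t i h b) (h i) = h.
Proof.
apply/ffunP => j; case: (eqVneq j i) => [->|ne].
  by rewrite upd_i.
by rewrite !upd_ne.
Qed.

Lemma swap_sum t i (W : jhist G t -> Hist G i t -> R) :
  \sum_h \sum_b W h b = \sum_h \sum_b W (@upd t i h b) (h i).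
Proof.
rewrite !pair_bigA /=.
pose s (p : (jhist G t * Hist G i t)%type) := (@upd t i p.1 p.2, p.1 i).
have sK : involutive s.
  by case=> h b; rewrite /s /= upd_i upd_upd.
rewrite (reindex_inj (inv_inj sK)) /=.
by apply: eq_bigr => -[h b] _.
Qed.

Lemma deviate_i (g : profile G) i (s : strat G i) : @deviate _ _ G g i s i = s.
Proof.
rewrite /deviate; case: eqP => // e.
by rewrite (eq_irrelevance e erefl).
Qed.

Lemma deviate_ne (g : profile G) i (s : strat G i) j : j != i -> @deviate _ _ G g i s j = g j.
Proof.
move=> ne; rewrite /deviate; case: eqP => // e.
by rewrite e eqxx in ne.
Qed.



Variable C : compression G.
Hypothesis wf : wf_game G.
Variable i : I.
Variable F : strat G i -> forall t, Ks C i t -> Hist G i t -> R.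
Variable Phi : (forall j : others i, strat G (val j)) -> forall t, Ks C i t -> Xs G t ->
                {dffun forall j : others i, Hist G (val j) t} -> R.
Hypothesis HF : forall g : profile G, valid_profile g ->
    forall t, (t < horizon G)%N -> forall k : Ks C i t, 0 < probK g k ->
    forall (x : Xs G t) (h : jhist G t),
      condK g k x h =
        F (g i) k (h i) *
        Phi (fun j => g (val j)) k x (finfun (fun j : others i => h (val j))).

Definition Fk (s : strat G i) t (k : Ks C i t) (b : Hist G i t) : R :=
  F s k b * (compress C b == k)%:R.
Definition SF (s : strat G i) t (k : Ks C i t) : R := \sum_b Fk s k b.
Definition good (s : strat G i) t (k : Ks C i t) : bool :=
  (SF s k != 0) && [forall b, 0 <= Fk s k b / SF s k].
Definition rhoK (s : strat G i) t (k : Ks C i t) (a : Us G i t) : R :=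
  if good s k then \sum_b Fk s k b / SF s k * s t b a
  else if [pick b | compress C b == k] is Some b then s t b a else 0.
Definition Rho (s : strat G i) : strat G i := fun t h => rhoK s (compress C h).

Lemma Rho_valid s : valid_strat s -> valid_strat (Rho s).
Proof.
move=> vs t tT h; rewrite /Rho /rhoK; case: (boolP (good s (compress C h))) => [/andP[nz /forallP ge]|_].
  split.
    move=> u; apply: sumr_ge0 => b _; apply: mulr_ge0; [exact: ge | exact: (vs t tT b).1].
  rewrite exchange_big /=.
  under eq_bigr => b _ do rewrite -mulr_sumr (vs t tT b).2 mulr1.
  by rewrite -mulr_suml mulfV.
case: pickP => [b _|none]; first exact: vs.
by have := none h; rewrite /= eqxx.
Qed.

Lemma mu_ge0 (g : profile G) : valid_profile g ->
  forall t, (t <= horizon G)%N -> forall x h, 0 <= mu g (t:=t) x h.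
Proof.
case: wf => P0ge _ PWok _ _ vg.
elim=> [|t IH] tT x h /=; first exact: P0ge.
have tT' : (t < horizon G)%N by [].
apply: sumr_ge0 => y _; apply: sumr_ge0 => u _; apply: sumr_ge0 => w _.
apply: mulr_ge0; last exact: ler0n.
apply: mulr_ge0; last exact: (PWok t tT').1.
apply: mulr_ge0; first by apply: IH; apply: ltnW.
by apply: prodr_ge0 => j _; apply: (vg j t tT' _).1.
Qed.

Lemma probK_ge0 (g : profile G) : valid_profile g ->
  forall t, (t <= horizon G)%N -> forall k : Ks C i t, 0 <= probK g k.
Proof.
move=> vg t tT k; apply: sumr_ge0 => x _; apply: sumr_ge0 => h _.
by apply: mulr_ge0; [exact: mu_ge0 | exact: ler0n].
Qed.

Definition Ph (g : profile G) t (k : Ks C i t) x (h : jhist G t) : R :=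
  Phi (fun j => g (val j)) k x (finfun (fun j : others i => h (val j))).

Lemma Ph_upd g t k x h b : Ph g k x (@upd t i h b) = Ph g k x h.
Proof.
rewrite /Ph; congr (Phi _ _ _ _); apply/ffunP => j; rewrite !ffunE.
by case: eqP => // e; exfalso; move: (valP j); rewrite -e eqxx.
Qed.

Lemma mu_split (g : profile G) : valid_profile g ->
  forall t, (t < horizon G)%N -> forall k : Ks C i t, 0 < probK g k ->
  forall x h, mu g x h * (compress C (h i) == k)%:R = probK g k * (Fk (g i) k (h i) * Ph g k x h).
Proof.
move=> vg t tT k pk x h.
have Pnz : probK g k != 0 by rewrite gt_eqF.
have E := HF vg tT pk x h; rewrite /condK in E.
rewrite /Fk /Ph; case: (eqVneq (compress C (h i)) k) => [e|ne]; last by rewrite !mulr0n !mulr0 mul0r mulr0.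
by rewrite !mulr1n !mulr1 -E e eqxx mulr1 [RHS]mulrC divfK.
Qed.


Lemma Fk_ne s t (k : Ks C i t) b : compress C b != k -> Fk s k b = 0.
Proof. by move=> ne; rewrite /Fk (negbTE ne) mulr0n mulr0. Qed.

Definition Inv t (Th : Xs G t -> jhist G t -> R) :=
  forall x (h h' : jhist G t), (forall j, j != i -> h j = h' j) ->
    compress C (h i) = compress C (h' i) -> Th x h = Th x h'.

Lemma split_k (g : profile G) t (Y : Xs G t -> jhist G t -> R) :
  \sum_x \sum_h mu g x h * Y x h =
  \sum_(k : Ks C i t) \sum_x \sum_h mu g x h * (compress C (h i) == k)%:R * Y x h.
Proof.
rewrite [RHS]exchange_big; apply: eq_bigr => x _ /=.
rewrite [RHS]exchange_big; apply: eq_bigr => h _ /=.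
rewrite (bigD1 (compress C (h i))) //= eqxx mulr1n mulr1 big1 ?addr0 // => k nk.
by rewrite eq_sym (negbTE nk) mulr0n mulr0 mul0r.
Qed.

Lemma good_of_pos (g : profile G) : valid_profile g ->
  forall t, (t < horizon G)%N -> forall k : Ks C i t, 0 < probK g k -> good (g i) k.
Proof.
move=> vg t tT k pk.
have Pnz : probK g k != 0 by rewrite gt_eqF.
pose B (h : jhist G t) := \sum_x Ph g k x h.
have Bupd : forall h (b : Hist G i t), B (upd h b) = B h.
  by move=> h b; rewrite /B; apply: eq_bigr => x _; rewrite Ph_upd.
have S1 : \sum_(h : jhist G t) Fk (g i) k (h i) * B h = 1.
  apply: (mulfI Pnz); rewrite mulr1; symmetry; rewrite {1}/probK.
  under eq_bigr => x _ do under eq_bigr => h _ do rewrite (mu_split vg tT pk x h).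
  rewrite exchange_big mulr_sumr; apply: eq_bigr => h _; rewrite /B !mulr_sumr.
  by apply: eq_bigr => x _; ring.
have [h0 Bh0] : exists h0, B h0 != 0.
  case: (boolP [exists h0, B h0 != 0]) => [/existsP//|/existsPn H0].
  have : \sum_(h : jhist G t) Fk (g i) k (h i) * B h = 0.
    by apply: big1 => h _; move/negPn/eqP: (H0 h) => ->; rewrite mulr0.
  by rewrite S1 => /eqP; rewrite oner_eq0.
have [x0 Ph0] : exists x0, Ph g k x0 h0 != 0.
  case: (boolP [exists x0, Ph g k x0 h0 != 0]) => [/existsP//|/existsPn H0].
  have : B h0 = 0 by apply: big1 => x _; move/negPn/eqP: (H0 x).
  by move/eqP; rewrite (negbTE Bh0).
have fb : forall b, 0 <= Fk (g i) k b * Ph g k x0 h0.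
  move=> b.
  have : 0 <= mu g x0 (upd h0 b) * (compress C ((upd h0 b) i) == k)%:R.
    by apply: mulr_ge0; [apply: mu_ge0 => //; exact: ltnW | exact: ler0n].
  by rewrite (mu_split vg tT pk) upd_i Ph_upd pmulr_rge0.
have Hne : (0 < #|Hist G i t|)%N by apply/card_gt0P; exists (h0 i).
have E2 : SF (g i) k * \sum_(h : jhist G t) B h = #|Hist G i t|%:R.
  rewrite mulr_sumr.
  transitivity (\sum_(h : jhist G t) \sum_b Fk (g i) k b * B h).
    by apply: eq_bigr => h _; rewrite /SF mulr_suml.
  rewrite swap_sum.
  transitivity (\sum_(h : jhist G t) (Fk (g i) k (h i) * B h) *+ #|Hist G i t|).
    apply: eq_bigr => h _.
    under eq_bigr => b _ do rewrite Bupd.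
    by rewrite sumr_const.
  by rewrite sumrMnl S1.
have SFnz : SF (g i) k != 0.
  apply/eqP => SF0; move: E2; rewrite SF0 mul0r => /esym/eqP.
  by rewrite pnatr_eq0 => /eqP H; rewrite H in Hne.
have SPpos : 0 < SF (g i) k * Ph g k x0 h0.
  rewrite lt0r mulf_neq0 //= /SF mulr_suml; apply: sumr_ge0 => b _; exact: fb.
rewrite /good SFnz /=; apply/forallP => b.
have -> : Fk (g i) k b / SF (g i) k =
          (Fk (g i) k b * Ph g k x0 h0) / (SF (g i) k * Ph g k x0 h0).
  by rewrite invfM mulrACA mulfV // mulr1.
by apply: divr_ge0; [exact: fb | exact: ltW].
Qed.

Lemma core (g : profile G) : valid_profile g ->
  forall t, (t < horizon G)%N -> forall (Th : Xs G t -> jhist G t -> R), Inv Th ->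
  forall a : Us G i t,
  \sum_x \sum_(h : jhist G t) mu g x h * (g i t (h i) a * Th x h) =
  \sum_x \sum_(h : jhist G t) mu g x h * (rhoK (g i) (compress C (h i)) a * Th x h).
Proof.
move=> vg t tT Th HTh a.
rewrite split_k [RHS]split_k; apply: eq_bigr => k _.
have rhok : forall x (h : jhist G t),
   mu g x h * (compress C (h i) == k)%:R * (rhoK (g i) (compress C (h i)) a * Th x h) =
   mu g x h * (compress C (h i) == k)%:R * (rhoK (g i) k a * Th x h).
  by move=> x h; case: eqP => [->//|_]; rewrite mulr0n mulr0 !mul0r.
under [RHS]eq_bigr => x _ do under eq_bigr => h _ do rewrite rhok.
have := probK_ge0 vg (ltnW tT) k; rewrite le_eqVlt => /orP[/eqP P0|pk].
  have nn : forall x (h : jhist G t), 0 <= mu g x h * (compress C (h i) == k)%:R.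
    by move=> x h; apply: mulr_ge0; [apply: mu_ge0 => //; exact: ltnW | exact: ler0n].
  have Z : forall x (h : jhist G t), mu g x h * (compress C (h i) == k)%:R = 0.
    move=> x h.
    have Zx : \sum_(h : jhist G t) mu g x h * (compress C (h i) == k)%:R = 0.
      apply: (psumr_eq0P _ (esym P0)) => // y _; apply: sumr_ge0 => h' _; exact: nn.
    by apply: (psumr_eq0P _ Zx) => // h' _; exact: nn.
  transitivity (0:R); [|symmetry]; apply: big1 => x _; apply: big1 => h _;
    by rewrite Z mul0r.
have gd := good_of_pos vg tT pk.
have SFnz : SF (g i) k != 0 by case/andP: gd.
pose A (h : jhist G t) := \sum_x Ph g k x h * Th x h.
have L : forall c : jhist G t -> R,
  \sum_x \sum_(h : jhist G t) mu g x h * (compress C (h i) == k)%:R * (c h * Th x h) =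
  probK g k * \sum_(h : jhist G t) Fk (g i) k (h i) * c h * A h.
  move=> c.
  transitivity (\sum_x \sum_(h : jhist G t) probK g k * (Fk (g i) k (h i) * Ph g k x h) * (c h * Th x h)).
    by apply: eq_bigr => x _; apply: eq_bigr => h _; rewrite (mu_split vg tT pk x h).
  rewrite exchange_big mulr_sumr; apply: eq_bigr => h _; rewrite /A !mulr_sumr.
  by apply: eq_bigr => x _; ring.
transitivity (probK g k * \sum_(h : jhist G t) Fk (g i) k (h i) * g i t (h i) a * A h).
  exact: (L (fun h => g i t (h i) a)).
transitivity (probK g k * \sum_(h : jhist G t) Fk (g i) k (h i) * rhoK (g i) k a * A h);
  last exact: (esym (L (fun _ => rhoK (g i) k a))).
congr (_ * _).
apply: (mulfI SFnz).
rewrite !mulr_sumr.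
transitivity (\sum_(h : jhist G t) \sum_b Fk (g i) k b * (Fk (g i) k (h i) * g i t (h i) a * A h)).
  by apply: eq_bigr => h _; rewrite /SF mulr_suml.
have Erho : SF (g i) k * rhoK (g i) k a = \sum_b Fk (g i) k b * g i t b a.
  rewrite /rhoK gd mulr_sumr; apply: eq_bigr => b _.
  by rewrite mulrA mulrCA mulfV // mulr1.
transitivity (\sum_(h : jhist G t) \sum_b Fk (g i) k b * g i t b a * (Fk (g i) k (h i) * A h)); last first.
  apply: eq_bigr => h _; rewrite -mulr_suml -Erho; ring.
rewrite swap_sum; apply: eq_bigr => h _; apply: eq_bigr => b _.
rewrite upd_i.
case: (eqVneq (compress C b) k) => eb; last by rewrite (Fk_ne _ eb); ring.
case: (eqVneq (compress C (h i)) k) => ehi; last by rewrite (Fk_ne _ ehi); ring.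
have -> : A (upd h b) = A h.
  rewrite /A; apply: eq_bigr => x _; rewrite Ph_upd (HTh x (upd h b) h) //.
    by move=> j nj; rewrite upd_ne.
  by rewrite upd_i eb ehi.
ring.
Qed.


Lemma act_prob_split (g : profile G) t (h : jhist G t) u :
  act_prob g h u = g i t (h i) (u i) * \prod_(j | j != i) g j t (h j) (u j).
Proof. by rewrite /act_prob (bigD1 i). Qed.

Lemma act_prob_dev (g : profile G) (s : strat G i) t (h : jhist G t) u :
  act_prob (deviate g s) h u = s t (h i) (u i) * \prod_(j | j != i) g j t (h j) (u j).
Proof.
rewrite /act_prob (bigD1 i) //= deviate_i; congr (_ * _).
by apply: eq_bigr => j nj; rewrite deviate_ne.
Qed.

Lemma reshuffle (g0 g1 : profile G) t
  (Om : Xs G t -> jhist G t -> {dffun forall j, Us G j t} -> R) :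
  \sum_x \sum_(h : jhist G t) mu g0 x h * \sum_u (act_prob g1 h u * Om x h u) =
  \sum_u \sum_x \sum_(h : jhist G t) mu g0 x h * (act_prob g1 h u * Om x h u).
Proof.
transitivity (\sum_x \sum_u \sum_(h : jhist G t) mu g0 x h * (act_prob g1 h u * Om x h u));
  last by rewrite exchange_big.
apply: eq_bigr => x _.
transitivity (\sum_(h : jhist G t) \sum_u mu g0 x h * (act_prob g1 h u * Om x h u));
  last by rewrite exchange_big.
by apply: eq_bigr => h _; rewrite mulr_sumr.
Qed.

Lemma step (g : profile G) : valid_profile g -> forall t, (t < horizon G)%N ->
  (forall phi : Xs G t -> jhist G t -> R, Inv phi ->
     \sum_x \sum_(h : jhist G t) mu g x h * phi x h =
     \sum_x \sum_(h : jhist G t) mu (deviate g (Rho (g i))) x h * phi x h) ->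
  forall Om : Xs G t -> jhist G t -> {dffun forall j, Us G j t} -> R,
  (forall u, Inv (fun x h => Om x h u)) ->
  \sum_x \sum_(h : jhist G t) mu g x h * \sum_u (act_prob g h u * Om x h u) =
  \sum_x \sum_(h : jhist G t) mu (deviate g (Rho (g i))) x h *
      \sum_u (act_prob (deviate g (Rho (g i))) h u * Om x h u).
Proof.
move=> vg t tT Hc Om HOm.
pose psi x (h : jhist G t) := \sum_u act_prob (deviate g (Rho (g i))) h u * Om x h u.
have Ipsi : Inv psi.
  move=> x h h' eqo ec; rewrite /psi; apply: eq_bigr => u _; rewrite !act_prob_dev.
  have := HOm u x h h' eqo ec; rewrite /= => ->.
  rewrite /Rho ec; congr (_ * _ * _); apply: eq_bigr => j nj; by rewrite eqo.
transitivity (\sum_x \sum_(h : jhist G t) mu g x h * psi x h); last exact: Hc psi Ipsi.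
rewrite /psi reshuffle [RHS]reshuffle; apply: eq_bigr => u _.
transitivity (\sum_x \sum_(h : jhist G t) mu g x h * (g i t (h i) (u i) *
   ((\prod_(j | j != i) g j t (h j) (u j)) * Om x h u))).
  by apply: eq_bigr => x _; apply: eq_bigr => h _; rewrite act_prob_split -mulrA.
transitivity (\sum_x \sum_(h : jhist G t) mu g x h * (rhoK (g i) (compress C (h i)) (u i) *
   ((\prod_(j | j != i) g j t (h j) (u j)) * Om x h u))); last first.
  by apply: eq_bigr => x _; apply: eq_bigr => h _; rewrite act_prob_dev -mulrA.
apply: (core vg tT (Th := fun x h => (\prod_(j | j != i) g j t (h j) (u j)) * Om x h u)).
move=> x h h' eqo ec /=.
have := HOm u x h h' eqo ec; rewrite /= => ->.
by congr (_ * _); apply: eq_bigr => j nj; rewrite eqo.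
Qed.

Definition ext t (h : jhist G t) (z : {dffun forall j, Zs G j t}) : jhist G t.+1 :=
  finfun (fun j => ((h j, z j) : Hist G j t.+1)).
Definition prev t (h : jhist G t.+1) : jhist G t := finfun (fun j => (h j).1).

Lemma prev_ext t (h : jhist G t) z : prev (ext h z) = h.
Proof. by apply/ffunP => j; rewrite !ffunE. Qed.

Lemma move_in (A B D : finType) (f : A -> B -> D -> R) :
  \sum_a \sum_b \sum_d f a b d = \sum_d \sum_a \sum_b f a b d.
Proof. under eq_bigr => a _ do rewrite exchange_big. by rewrite exchange_big. Qed.

Lemma move5 (A B D E H : finType) (f : A -> B -> D -> E -> H -> R) :
  \sum_a \sum_b \sum_d \sum_e \sum_k f a b d e k =
  \sum_d \sum_e \sum_k \sum_a \sum_b f a b d e k.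
Proof.
transitivity (\sum_d \sum_a \sum_b \sum_e \sum_k f a b d e k).
  exact: (move_in (fun a b d => \sum_e \sum_k f a b d e k)).
apply: eq_bigr => d _.
transitivity (\sum_e \sum_a \sum_b \sum_k f a b d e k).
  exact: (move_in (fun a b e => \sum_k f a b d e k)).
apply: eq_bigr => e _.
exact: (move_in (fun a b k => f a b d e k)).
Qed.

Lemma collapse t (X : Xs G t.+1) (Z : {dffun forall j, Zs G j t}) (M : jhist G t -> R)
   (phi : Xs G t.+1 -> jhist G t.+1 -> R) :
  \sum_x' \sum_(h' : jhist G t.+1) M (prev h') *
     (((X == x') && [forall j, Z j == (h' j).2]) : nat)%:R * phi x' h' =
  \sum_(h : jhist G t) M h * phi X (ext h Z).
Proof.
rewrite (bigD1 X) //= [X in _ + X = _]big1 ?addr0; last first.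
  move=> x' nx'; apply: big1 => h' _.
  have -> : (X == x') = false by apply/negbTE; rewrite eq_sym.
  by rewrite mulr0n mulr0 mul0r.
rewrite eqxx /=.
transitivity (\sum_(h' : jhist G t.+1 | [forall j, Z j == (h' j).2]) M (prev h') * phi X h').
  rewrite [RHS]big_mkcond; apply: eq_bigr => h' _.
  by case: ifP => _; [rewrite mulr1n mulr1 | rewrite mulr0n mulr0 mul0r].
rewrite (reindex_onto (fun h => ext h Z) (@prev t)) /=; last first.
  move=> h' /forallP P; apply/ffunP => j; rewrite !ffunE /=.
  by move/eqP: (P j) => ->; case: (h' j).
apply: eq_big => [h|h _]; last by rewrite prev_ext.
rewrite prev_ext eqxx andbT; apply/forallP => j; by rewrite ffunE.
Qed.


Lemma unroll (g0 : profile G) t (phi : Xs G t.+1 -> jhist G t.+1 -> R) :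
  \sum_x' \sum_(h' : jhist G t.+1) mu g0 x' h' * phi x' h' =
  \sum_x \sum_(h : jhist G t) mu g0 x h *
     \sum_u (act_prob g0 h u * \sum_w PW G t w *
                 phi (dyn G t x u w).1.1 (ext h (dyn G t x u w).1.2)).
Proof.
transitivity (\sum_x' \sum_(h' : jhist G t.+1) \sum_x \sum_u \sum_w
   mu g0 x (prev h') * act_prob g0 (prev h') u * PW G t w *
   ((((dyn G t x u w).1.1 == x') && [forall j, (dyn G t x u w).1.2 j == (h' j).2]) : nat)%:R
   * phi x' h').
  apply: eq_bigr => x' _; apply: eq_bigr => h' _.
  rewrite [mu _ _ _]/= mulr_suml; apply: eq_bigr => x _.
  rewrite mulr_suml; apply: eq_bigr => u _.
  by rewrite mulr_suml.
rewrite move5.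
transitivity (\sum_x \sum_u \sum_w \sum_(h : jhist G t)
   mu g0 x h * act_prob g0 h u * PW G t w *
   phi (dyn G t x u w).1.1 (ext h (dyn G t x u w).1.2)).
  apply: eq_bigr => x _; apply: eq_bigr => u _; apply: eq_bigr => w _.
  exact: (collapse _ _ (fun hp => mu g0 x hp * act_prob g0 hp u * PW G t w)).
apply: eq_bigr => x _.
rewrite move_in; apply: eq_bigr => h _.
rewrite mulr_sumr; apply: eq_bigr => u _.
rewrite mulr_sumr mulr_sumr; apply: eq_bigr => w _.
by rewrite !mulrA.
Qed.

Lemma claim (g : profile G) : valid_profile g -> forall t, (t <= horizon G)%N ->
  forall phi : Xs G t -> jhist G t -> R, Inv phi ->
     \sum_x \sum_(h : jhist G t) mu g x h * phi x h =
     \sum_x \sum_(h : jhist G t) mu (deviate g (Rho (g i))) x h * phi x h.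
Proof.
move=> vg; elim=> [|t IH] tT phi Hphi; first by [].
rewrite !unroll.
apply: (step vg tT (IH (ltnW tT))
  (Om := fun x h u => \sum_w PW G t w * phi (dyn G t x u w).1.1 (ext h (dyn G t x u w).1.2))).
move=> u x h h' eqo ec /=; apply: eq_bigr => w _; congr (_ * _); apply: Hphi.
  by move=> j nj; rewrite !ffunE /= eqo.
by rewrite !ffunE /= ec.
Qed.

Lemma payoff_dev (g : profile G) : valid_profile g ->
  forall j, payoff (deviate g (Rho (g i))) j = payoff g j.
Proof.
move=> vg j; rewrite /payoff; apply: eq_bigr => t _; symmetry.
by apply: (step vg (ltn_ord t) (claim vg (ltnW (ltn_ord t)))
  (Om := fun x h u => \sum_w PW G t w * (dyn G t x u w).2 j)).
Qed.

Lemma deviate_valid (g : profile G) (s : strat G i) :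
  valid_profile g -> valid_strat s -> valid_profile (deviate g s).
Proof.
move=> vg vs j; case: (eqVneq j i) => [->|nj]; first by rewrite deviate_i.
by rewrite deviate_ne.
Qed.

Lemma lemmaA (g : profile G) : valid_profile g ->
  valid_profile (deviate g (Rho (g i))) /\
  forall j, payoff (deviate g (Rho (g i))) j = payoff g j.
Proof.
move=> vg; split; last exact: payoff_dev.
apply: deviate_valid => //; apply: Rho_valid; exact: vg.
Qed.

End A.

Lemma lemmaA' (I : finType) (R : realType) (G : game I R) (C : compression G) :
  wf_game G -> forall i, USI C i ->
  exists F : strat G i -> forall t, Ks C i t -> Hist G i t -> R,
    forall g : profile G, valid_profile g ->
      valid_profile (deviate g (Rho F (g i))) /\
      forall j, payoff (deviate g (Rho F (g i))) j = payoff g j.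
Proof.
move=> wf i [F [Phi HF]]; exists F => g vg.
exact: (lemmaA wf HF vg).
Qed.

Definition mix (I : finType) (R : realType) (G : game I R) (C : compression G)
  (Fs : forall i, strat G i -> forall t, Ks C i t -> Hist G i t -> R)
  (L : seq I) (h : profile G) : profile G :=
  fun j => if j \in L then Rho (Fs j) (h j) else h j.

Lemma mix_ok (I : finType) (R : realType) (G : game I R) (C : compression G)
  (Fs : forall i, strat G i -> forall t, Ks C i t -> Hist G i t -> R) :
  (forall i (g : profile G), valid_profile g ->
      valid_profile (deviate g (Rho (Fs i) (g i))) /\
      forall j, payoff (deviate g (Rho (Fs i) (g i))) j = payoff g j) ->
  forall L (h : profile G), valid_profile h ->
    valid_profile (mix Fs L h) /\ forall j, payoff (mix Fs L h) j = payoff h j.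
Proof.
move=> HFs; elim=> [|a L IH] h vh.
  have -> : mix Fs [::] h = h.
    by apply: functional_extensionality_dep => j; rewrite /mix in_nil.
  by [].
case: (boolP (a \in L)) => aL.
  have -> : mix Fs (a :: L) h = mix Fs L h.
    apply: functional_extensionality_dep => j; rewrite /mix inE.
    by case: (eqVneq j a) => [->|nja] /=; rewrite ?aL.
  exact: IH.
have -> : mix Fs (a :: L) h = deviate (mix Fs L h) (Rho (Fs a) (@mix I R G C Fs L h a)).
  apply: functional_extensionality_dep => j.
  case: (eqVneq j a) => [->|nja].
    by rewrite deviate_i /mix inE eqxx /= (negbTE aL).
  by rewrite deviate_ne // /mix inE (negbTE nja).
have [v1 p1] := IH h vh.
have [v2 p2] := HFs a _ v1.
by split => // j; rewrite p2 p1.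
Qed.

Theorem theorem2 (I : finType) (R : realType) (G : game I R)
    (C : compression G) :
  wf_game G ->
  (forall i : I, USI C i) ->
  forall v : I -> R,
    (exists rho : profile G, K_BNE C rho /\ forall i, payoff rho i = v i) <->
    (exists g : profile G, BNE g /\ forall i, payoff g i = v i).
Proof.
move=> wf HU v; split.
  by case=> rho [[bne _] pv]; exists rho.
case=> g [[vg dev] pv].
pose Fs i := proj1_sig (constructive_indefinite_description _ (lemmaA' wf (HU i))).
have HFs : forall i (g : profile G), valid_profile g ->
      valid_profile (deviate g (Rho (Fs i) (g i))) /\
      forall j, payoff (deviate g (Rho (Fs i) (g i))) j = payoff g j.
  by move=> i; exact: (proj2_sig (constructive_indefinite_description _ (lemmaA' wf (HU i)))).
pose rho : profile G := fun j => Rho (Fs j) (g j).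
have rhoE : rho = mix Fs (enum I) g.
  by apply: functional_extensionality_dep => j; rewrite /mix mem_enum.
have [vrho prho] := mix_ok HFs (enum I) vg.
rewrite -rhoE in vrho prho.
exists rho; split; last by move=> j; rewrite prho pv.
split; last first.
  by move=> j; exists (fun t k a => rhoK (Fs j) (g j) k a) => t _ h.
split => // i s vs.
have dE : deviate rho s = mix Fs [seq j <- enum I | j != i] (deviate g s).
  apply: functional_extensionality_dep => j.
  case: (eqVneq j i) => [->|nji].
    by rewrite deviate_i /mix mem_filter eqxx /= deviate_i.
  by rewrite deviate_ne // /mix mem_filter nji mem_enum /= deviate_ne.
have [_ pd] := mix_ok HFs [seq j <- enum I | j != i] (deviate_valid vg vs).
by rewrite dE pd prho; exact: dev i s vs.
Qed.
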